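(* Let $(\Omega,\Sigma,\mathbb{P})$ be a probability space, let $\gamma<0$, and let $W_t:\Omega\to(0,\infty)$, $t\in\mathbb{N}$, be random variables with $E[W_t^\gamma]<\infty$ for all $t$. Define $$C:=\liminf_{t\to\infty}\frac{1}{t}\,\frac{1}{\gamma}\log\big(E[W_t^\gamma]\big).$$ Then $$\liminf_{t\to\infty}\frac{1}{t}\log W_t\geq C\quad\text{almost surely.}$$ Moreover, if $C>0$, then for every $b\in[0,\infty)$ the hitting time $T_b:=\inf\{t\in\mathbb{N}: W_t>b\}$ is integrable and $$\limsup_{b\to+\infty}\frac{E[T_b]}{\log b}\leq\frac{1}{C}.$$
   Context: $\log$ is the natural logarithm. $C$ takes values in $[-\infty,+\infty]$; if $C=+\infty$ then $1/C:=0$. *)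

(* Defs.v *)
From HB Require Import structures.
From mathcomp Require Import all_boot all_order all_algebra.
From mathcomp Require Import all_classical all_reals all_analysis.
Set Implicit Arguments. Unset Strict Implicit. Unset Printing Implicit Defensive.
Import Order.TTheory GRing.Theory Num.Theory.
Local Open Scope classical_set_scope.
Local Open Scope ring_scope.

Definition hitting_time (R : realType) (Omega : Type) (W : nat -> Omega -> R)
  (b : R) (w : Omega) : \bar R :=
  match pselect (exists t : nat, b < W t w) with
  | left H => ((ex_minn H)%:R)%:E
  | right _ => +oo%E
  end.

(* C := liminf_t (1/t) (1/gamma) log E[W_t^gamma], in the extended reals.
   (E[W_t^gamma] is assumed finite, so fine is harmless; the t = 0 term
   does not affect the liminf.) *)
Definition growth_const (d : measure_display) (Omega : measurableType d)
  (R : realType) (P : probability Omega R) (gamma : R) (W : nat -> Omega -> R)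
  : \bar R :=
  limn_einf (fun t : nat =>
    ((t%:R)^-1 * gamma^-1 * ln (fine ('E_P[fun w => W t w `^ gamma])))%:E).

(* Main.v *)
Require Import Defs.
From HB Require Import structures.
From mathcomp Require Import all_boot all_order all_algebra.
From mathcomp Require Import all_classical all_reals all_analysis.
From mathcomp Require Import measurable_realfun ring lra.
Import Order.TTheory GRing.Theory Num.Theory.
Local Open Scope classical_set_scope.
Import numFieldTopology.Exports.
Local Open Scope ring_scope.



Section aux.
Context {R : realType}.
Local Open Scope ereal_scope.

Lemma einf_ge (u : (\bar R)^nat) (c : \bar R) n :
  (forall t, (n <= t)%N -> c <= u t) -> c <= limn_einf u.
Proof.
move=> H.
have -> : limn_einf u = limf_einf u \oo by [].
rewrite limf_einfE.
apply: (@le_trans _ _ (ereal_inf (u @` [set t | (n <= t)%N]))).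
  by apply: le_ereal_inf_tmp => _ [t /= nt <-]; exact: H.
by apply: ereal_sup_ubound; exists [set t | (n <= t)%N] => //; exists n.
Qed.

Lemma einf_gt (u : (\bar R)^nat) (c : \bar R) :
  c < limn_einf u -> exists n, forall t, (n <= t)%N -> c < u t.
Proof.
have -> : limn_einf u = limf_einf u \oo by [].
rewrite limf_einfE => /ereal_sup_gt[_ [V [n _ nV] <-]] cV.
exists n => t nt; apply: (lt_le_trans cV).
by apply: ereal_inf_lbound; exists t => //; exact: nV.
Qed.

Lemma geo_bound (x : R) : (0 < x)%R -> (x < 1)%R ->
  \sum_(k <oo) (x ^+ k)%:E <= ((1 - x)^-1)%:E.
Proof.
move=> x0 x1.
apply: lime_le; first by apply: is_cvg_nneseries => n _ _; rewrite lee_fin exprn_ge0 // ltW.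
apply: nearW => n; rewrite sumEFin lee_fin.
have := @geometric_le_lim R n 1 x ler01 x0.
rewrite ger0_norm; last exact: ltW.
move=> /(_ x1); rewrite mul1r.
suff -> : (\sum_(0 <= i < n) x ^+ i = series (geometric 1 x) n)%R by [].
by rewrite /series /=; apply: eq_bigr => i _; rewrite mul1r.
Qed.

Lemma series_bound (u : nat -> \bar R) (M : nat) (r : R) :
  (0 < r)%R -> (r < 1)%R -> (forall t, 0 <= u t) -> (forall t, u t <= 1) ->
  (forall t, (M <= t)%N -> u t <= (r ^+ (t - M))%:E) ->
  \sum_(t <oo) u t <= (M%:R + (1 - r)^-1)%:E.
Proof.
move=> r0 r1 u0 u1 uM.
rewrite (@nneseries_split _ _ 0 M) // add0n EFinD.
apply: leeD.
  apply: (@le_trans _ _ (\sum_(0 <= k < M) (1:R)%:E)).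
    by apply: lee_sum => i _; exact: u1.
  by rewrite sumEFin sumr_const_nat subn0.
rewrite -nneseries_addn //.
apply: (le_trans _ (@geo_bound r r0 r1)).
apply: lee_nneseries => [i _ _|n _]; first exact: u0.
by rewrite (le_trans (uM _ _)) ?leq_addl // addnK.
Qed.

End aux.

Section main.
Context d (Omega : measurableType d) (R : realType) (P : probability Omega R)
  (gamma : R) (W : nat -> Omega -> R).
Hypothesis g0 : gamma < 0.
Hypothesis mW : forall t, measurable_fun setT (W t).
Hypothesis W0 : forall t w, 0 < W t w.
Hypothesis Efin : forall t, ('E_P[fun w => (W t w `^ gamma)%R] < +oo)%E.

Let e t := fine ('E_P[fun w => (W t w `^ gamma)%R])%E.

Lemma Ee t : ('E_P[fun w => (W t w `^ gamma)%R] = (e t)%:E)%E.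
Proof.
rewrite /e fineK // ge0_fin_numE ?Efin //.
by rewrite unlock; apply: integral_ge0 => w _; rewrite lee_fin powR_ge0.
Qed.

Lemma mle t b : measurable [set w | W t w <= b].
Proof.
by have := measurable_fun_le measurableT (mW t) (measurable_cst b); rewrite setTI.
Qed.

Lemma markov t b : 0 < b ->
  (P [set w | (W t w <= b)%R] * (expR (gamma * ln b))%:E <= (e t)%:E)%E.
Proof.
move=> b0; set A := [set w | W t w <= b].
have mA : measurable A by exact: mle.
have -> : P A = (\int[P]_(x in setT) (\1_A x)%:E)%E.
  by rewrite integral_indic // setIT.
rewrite -Ee unlock muleC.
rewrite -(integralZl_indic measurableT (fun _ => A)) //; last first.
  by move=> /ltW; rewrite leNgt expR_gt0.
apply: ge0_le_integral => //.
- apply/measurable_EFinP; apply: measurable_funM => //; exact: measurable_indic.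
- apply/measurable_EFinP; exact: (measurableT_comp (measurable_powR gamma) (mW t)).
move=> x _; rewrite lee_fin indicE.
case: (boolP (x \in A)) => [|_]; last by rewrite mulr0 powR_ge0.
rewrite inE /A /= => xb; rewrite mulr1 /powR gt_eqF ?W0 //.
by rewrite ler_expR ler_nM2l // ler_ln // ?posrE ?W0.
Qed.

Lemma C_bound c : (c%:E < growth_const P gamma W)%E ->
  exists N, forall t, (N <= t)%N -> e t < expR (gamma * c * t%:R).
Proof.
move=> /einf_gt [n Hn]; exists n.+1 => t nt.
have := Hn t (ltnW nt); rewrite lte_fin => H.
have [e0|e0] := leP (e t) 0; first by rewrite (le_lt_trans e0) ?expR_gt0.
have {}H : c < (t%:R)^-1 / gamma * ln (e t) by exact: H.
rewrite -[e t]lnK ?posrE // ltr_expR.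
have t0 : 0 < t%:R :> R by rewrite ltr0n (leq_trans _ nt).
set L := ln (e t) in H *.
set y := (t%:R^-1 / gamma * L) in H.
have -> : L = y * (gamma * t%:R).
  by rewrite /y; field; rewrite ltr0_neq0 // lt0r_neq0.
have gt : gamma * t%:R < 0 by rewrite pmulr_llt0.
nra.
Qed.


Lemma part1_c c c' : c < c' -> (c'%:E < growth_const P gamma W)%E ->
  {ae P, forall w, exists n, forall t, (n <= t)%N -> expR (c * t%:R) < W t w}.
Proof.
move=> cc' /C_bound [N HN].
set F := fun t => [set w | W t w <= expR (c * t%:R)].
have mF t : measurable (F t) by exact: mle.
set r := expR (gamma * (c' - c)).
have r0 : 0 < r by exact: expR_gt0.
have r1 : r < 1 by rewrite expR_lt1 pmulr_llt0 // subr_gt0.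
have PF := @lim_sup_set_cvg0 _ _ _ P F mF.
have /PF PF0 : (\sum_(t <oo) P (F t) < +oo)%E.
  apply: (le_lt_trans (@series_bound _ (fun t => P (F t)) N r r0 r1 _ _ _)); last exact: ltry.
  - by move=> t; exact: measure_ge0.
  - by move=> t; exact: probability_le1.
  move=> t Nt.
  have Pfin : P (F t) \is a fin_num.
    by rewrite ge0_fin_numE ?measure_ge0 // (le_lt_trans (probability_le1 _ _)) ?ltry.
  rewrite -(fineK Pfin) lee_fin.
  have := @markov t _ (expR_gt0 (c * t%:R)); rewrite -(fineK Pfin) -EFinM lee_fin expRK.
  move=> /le_lt_trans /(_ (HN _ Nt)).
  rewrite -ltr_pdivlMr ?expR_gt0 // -expRB => H.
  apply: (le_trans (ltW H)).
  have -> : gamma * c' * t%:R - gamma * (c * t%:R) = t%:R * (gamma * (c' - c)) by ring.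
  rewrite expRM_natl -/r.
  rewrite -{1}(subnK Nt) exprD -[leRHS]mulr1 ler_pM2l ?exprn_gt0 //.
  by rewrite exprn_ile1 // ltW.
exists (lim_sup_set F); split => //.
  apply: bigcapT_measurable => n; apply: bigcup_measurable => j _; exact: mF.
move=> w /= Hw n _.
have [j /not_implyP [nj Hj]] := (existsNP _).2 ((forallNP _).2 Hw n).
exists j => //; rewrite /F /=; rewrite leNgt; exact/negP.
Qed.


Definition Gs b t := \bigcap_(s in [set s | (s <= t)%N]) [set w | W s w <= b].

Lemma mGs b t : measurable (Gs b t).
Proof.
apply: bigcap_measurable; first by exists 0%N.
by move=> s _; exact: mle.
Qed.

Lemma hit_sum b w : hitting_time W b w = (\sum_(t <oo) (\1_(Gs b t) w)%:E)%E.
Proof.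
have ind0 t : (0 <= (\1_(Gs b t) w : R)%:E)%E by rewrite lee_fin indicE ler0n.
rewrite /hitting_time; case: pselect => [H|H].
  case: ex_minnP => m Hm Hmin.
  rewrite (@nneseries_split _ _ 0 m) // add0n eseries0 ?adde0; last first.
    move=> i mi _; rewrite indicE memNset //= => /(_ m mi).
    by rewrite /= leNgt Hm.
  apply/esym; transitivity (\sum_(0 <= k < m) (1:R)%:E)%E; last first.
    by rewrite sumEFin sumr_const_nat subn0.
  apply: eq_big_nat => i /andP [_ im]; rewrite indicE mem_set // => s /= si.
    rewrite leNgt; apply/negP => /Hmin ms.
    by move: (leq_ltn_trans (leq_trans ms si) im); rewrite ltnn.
have E : (fun n => \sum_(0 <= k < n) (\1_(Gs b k) w : R)%:E)%E = (fun n => n%:R%:E).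
  apply: funext => n; transitivity (\sum_(0 <= k < n) (1:R)%:E)%E; last first.
    by rewrite sumEFin sumr_const_nat subn0.
  apply: eq_big_nat => i _; rewrite indicE mem_set // => s _ /=; rewrite leNgt.
  by apply/negP => bW; apply: H; exists s.
rewrite E; apply/esym/cvg_lim => //; apply/cvgenyP; exact: cvg_id.
Qed.


Lemma mind b t : measurable_fun setT (fun w => (\1_(Gs b t) w : R)%:E).
Proof. apply/measurable_EFinP; exact: measurable_indic (mGs b t). Qed.

Lemma hit_meas b : measurable_fun setT (hitting_time W b).
Proof.
rewrite (_ : hitting_time W b = fun w => (\sum_(t <oo) (\1_(Gs b t) w : R)%:E)%E).
  apply: ge0_emeasurable_sum => [k x _ _|k _]; last exact: mind.
  by rewrite lee_fin indicE ler0n.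
by apply: funext => w; exact: hit_sum.
Qed.

Lemma hit_int b :
  (\int[P]_w hitting_time W b w = \sum_(t <oo) P (Gs b t))%E.
Proof.
under eq_integral do rewrite hit_sum.
rewrite integral_nneseries //.
- by apply: eq_eseriesr => t _; rewrite integral_indic ?setIT //; exact: mGs.
- by move=> t; exact: mind.
Qed.

Lemma int_bound c N : 0 < c ->
  (forall t, (N <= t)%N -> e t < expR (gamma * c * t%:R)) ->
  forall b t0, 0 <= b -> (0 < b -> ln b <= c * t0%:R) ->
  (\int[P]_w hitting_time W b w <= ((N + t0)%:R + (1 - expR (gamma * c))^-1)%:E)%E.
Proof.
move=> c0 HN b t0 b0 hb.
set r := expR (gamma * c).
have r0 : 0 < r by exact: expR_gt0.
have r1 : r < 1 by rewrite expR_lt1 pmulr_llt0.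
rewrite hit_int; apply: series_bound r0 r1 _ _ _.
- by move=> t; exact: measure_ge0.
- by move=> t; apply: probability_le1; exact: mGs.
move=> t Mt.
rewrite le0r in b0; case/orP: b0 => [/eqP bz|bpos].
  have -> : P (Gs b t) = 0%E.
    apply: (subset_measure0 (mGs b t) measurable0) => //.
    by move=> w /(_ 0%N (leq0n t)) /=; rewrite bz leNgt W0.
  by rewrite lee_fin; apply: exprn_ge0; exact: (ltW (expR_gt0 _)).
have NT : (N <= t)%N by apply: leq_trans Mt; rewrite leq_addr.
apply: (@le_trans _ _ (P [set w | W t w <= b])).
  apply: le_measure; rewrite ?inE; [exact: mGs|exact: mle|].
  by move=> w /(_ t (leqnn t)).
have Pfin : P [set w | W t w <= b] \is a fin_num.
  by rewrite ge0_fin_numE ?measure_ge0 // (le_lt_trans (probability_le1 _ _)) ?ltry //; exact: mle.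
rewrite -(fineK Pfin) lee_fin.
have := @markov t _ bpos; rewrite -(fineK Pfin) -EFinM lee_fin.
move=> /le_lt_trans /(_ (HN _ NT)).
rewrite -ltr_pdivlMr ?expR_gt0 // -expRB => H.
apply: (le_trans (ltW H)).
rewrite /r -expRM_natl ler_expR natrB //.
have := hb bpos; have : t0%:R <= (N + t0)%:R :> R by rewrite ler_nat leq_addl.
set M := (N + t0)%:R; move=> t0M hl.
have : 0 <= c * (M - t0%:R) by apply: mulr_ge0; [exact: ltW | rewrite subr_ge0].
move=> h; have h2 : 0 <= c * M - ln b by lra.
have h3 : 0 <= - gamma * (c * M - ln b).
  by apply: mulr_ge0 => //; rewrite oppr_ge0 ltW.
lra.
Qed.


Lemma hit_ge0 b w : (0 <= hitting_time W b w)%E.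
Proof. rewrite /hitting_time; case: pselect => H; [by rewrite lee_fin ler0n|exact: leey]. Qed.

Lemma part1_seq (c : nat -> R) : (forall k, c k < c k.+1) ->
  (forall k, ((c k.+1)%:E < growth_const P gamma W)%E) ->
  (forall L, (forall k, ((c k)%:E <= L)%E) -> (growth_const P gamma W <= L)%E) ->
  {ae P, forall w, (growth_const P gamma W <=
       limn_einf (fun t : nat => ((t%:R)^-1 * ln (W t w))%R%:E))%E}.
Proof.
move=> inc lt sup.
have := @ae_foralln _ _ _ P (fun k w => exists n, forall t, (n <= t)%N -> expR (c k * t%:R) < W t w)
  (fun k => @part1_c (c k) (c k.+1) (inc k) (lt k)).
apply: filterS => w Hw; apply: sup => k.
have [n Hn] := Hw k.
apply: (@einf_ge _ _ _ n.+1) => t nt; rewrite lee_fin.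
have t0 : 0 < t%:R :> R by rewrite ltr0n (leq_trans _ nt).
have := Hn t (ltnW nt).
rewrite -ltr_ln ?posrE ?expR_gt0 ?W0 // expRK => H.
by rewrite ler_pdivlMl // mulrC ltW.
Qed.


Local Notation G := (growth_const P gamma W).

Lemma part1 : {ae P, forall w, (G <=
       limn_einf (fun t : nat => ((t%:R)^-1 * ln (W t w))%R%:E))%E}.
Proof.
case hG : G => [x||].
- rewrite -hG; apply: (@part1_seq (fun k => x - (k.+1%:R)^-1)).
  + move=> k; rewrite ltrD2l ltrN2 ltf_pV2 ?posrE ?ltr0n // ltr_nat; exact: ltnSn.
  + move=> k; rewrite hG lte_fin.
    have : 0 < (k.+2%:R : R)^-1 by rewrite invr_gt0 ltr0n.
    move: (k.+2%:R^-1) => q ?; lra.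
  + rewrite hG => -[y| |] H; last 2 first.
    * exact: leey.
    * by have := H 0%N; rewrite leeNy_eq.
    rewrite lee_fin; apply/ler_addgt0Pr => eps eps0.
    set k := Num.truncn (eps^-1).
    have := H k; rewrite lee_fin => Hk.
    have h1 : eps^-1 < k.+1%:R by exact: truncnS_gt.
    have h2 : (k.+1%:R : R)^-1 < eps.
      rewrite -[eps]invrK ltf_pV2 ?posrE ?invr_gt0 ?ltr0n //.
    move: Hk h2; move: (k.+1%:R^-1) => q; lra.
- rewrite -hG; apply: (@part1_seq (fun k => k%:R)).
  + by move=> k; rewrite ltr_nat.
  + by move=> k; rewrite hG ltry.
  + rewrite hG => -[y| |] H; last 2 first.
    * exact: lexx.
    * by have := H 0%N; rewrite leeNy_eq.
    have := H (Num.truncn y).+1; rewrite lee_fin => Hk.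
    have := truncnS_gt y; rewrite ltNge; move/negP; case.
    exact: Hk.
- by apply: (aeW P) => w; exact: leNye.
Qed.


Lemma t0_bound (c b : R) : 0 < c -> 0 < b ->
  ln b <= c * (Num.truncn (ln b / c)).+1%:R.
Proof.
move=> c0 b0; have := truncnS_gt (ln b / c).
by rewrite ltr_pdivrMr // mulrC => /ltW.
Qed.

Lemma part2_int : (0 < G)%E ->
  forall b : R, 0 <= b -> P.-integrable setT (hitting_time W b).
Proof.
move=> G0 b b0.
have [c [c0 cG]] : exists c, 0 < c /\ (c%:E < G)%E.
  move: G0; case: G => [x||] //.
  - rewrite lte_fin => x0; exists (x / 2); split; first by rewrite divr_gt0.
    rewrite lte_fin; lra.
  - by move=> _; exists 1; split; [exact: ltr01|exact: ltry].
have [N HN] := @C_bound c cG.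
apply/integrableP; split; first exact: hit_meas.
under eq_integral do rewrite gee0_abs ?hit_ge0 //.
apply: (le_lt_trans (@int_bound c N c0 HN b (Num.truncn (ln b / c)).+1 b0 _)); last exact: ltry.
by move=> bpos; exact: t0_bound.
Qed.


Lemma part2_sup : (0 < G)%E ->
  (limf_esup (fun b : R =>
         ((\int[P]_w hitting_time W b w) / (ln b)%R%:E)%E) (+oo)%R
       <= G^-1)%E.
Proof.
move=> G0.
have [z [Gz z0 key]] : exists z : R, [/\ (G^-1 = z%:E)%E, 0 <= z &
    forall eps, 0 < eps -> (((z + eps)^-1)%:E < G)%E].
  move: G0; case: G => [x||] //.
  - rewrite lte_fin => x0; exists x^-1; split.
    + by rewrite inver gt_eqF.
    + by rewrite invr_ge0 ltW.
    + move=> eps eps0; rewrite lte_fin -[X in _ < X]invrK.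
      rewrite ltf_pV2 ?posrE ?invr_gt0 //; last by rewrite addr_gt0 // invr_gt0.
      by rewrite ltrDl.
  - move=> _; exists 0; split => // eps eps0; exact: ltry.
rewrite Gz; apply/lee_addgt0Pr => eps eps0.
have ze : 0 < z + eps / 2 by rewrite ltr_wpDl // divr_gt0.
set c := (z + eps / 2)^-1.
have c0 : 0 < c by rewrite invr_gt0.
have eps2 : 0 < eps / 2 by rewrite divr_gt0.
have [N HN] := @C_bound c (key _ eps2).
set r := expR (gamma * c).
have r1 : r < 1 by rewrite expR_lt1 pmulr_llt0.
set K := N%:R + 1 + (1 - r)^-1.
have K0 : 0 <= K.
  by rewrite addr_ge0 // ?addr_ge0 // invr_ge0 subr_ge0 ltW.
rewrite limf_esupE.
set V := [set b : R | expR (2 * K / eps) < b].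
apply: (@le_trans _ _ (ereal_sup ((fun b : R =>
         ((\int[P]_w hitting_time W b w) / (ln b)%R%:E)%E) @` V))).
  apply: ereal_inf_lbound; exists V => //; exact: nbhs_pinfty_gt (num_real _).
apply: ge_ereal_sup => _ [b Vb <-].
have b0 : 0 < b by apply: lt_trans Vb; exact: expR_gt0.
have Lb : 2 * K / eps < ln b by rewrite -ltr_expR lnK.
set L := ln b in Lb *.
have L0 : 0 < L by apply: le_lt_trans Lb; rewrite divr_ge0 ?mulr_ge0 // ltW.
set t0 := (Num.truncn (L / c)).+1.
have I := @int_bound c N c0 HN b t0 (ltW b0) (fun _ => @t0_bound c b c0 b0).
rewrite inver gt_eqF //.
apply: (le_trans (lee_wpmul2r _ I)); first by rewrite lee_fin invr_ge0 ltW.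
rewrite -EFinM -EFinD lee_fin ler_pdivrMr //.
have ht0 : t0%:R <= L / c + 1.
  by rewrite /t0 -addn1 natrD lerD2r truncn_le divr_ge0 // ltW.
have Lc : L / c = L * z + L * (eps / 2) by rewrite /c invrK mulrDr.
have hK : 2 * K < L * eps by rewrite -ltr_pdivrMr.
rewrite Lc in ht0; rewrite natrD.
move: hK ht0; rewrite /K; move: (1 - r)^-1 => q.
nra.
Qed.

End main.

Theorem theorem3 (d : measure_display) (Omega : measurableType d)
  (R : realType) (P : probability Omega R) (gamma : R) (W : nat -> Omega -> R) :
  (gamma < 0)%R ->
  (forall t, measurable_fun setT (W t)) ->
  (forall t w, (0 < W t w)%R) ->
  (forall t, ('E_P[fun w => (W t w `^ gamma)%R] < +oo)%E) ->
  {ae P, forall w, (growth_const P gamma W <=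
       limn_einf (fun t : nat => ((t%:R)^-1 * ln (W t w))%R%:E))%E}
  /\
  ((0 < growth_const P gamma W)%E ->
     (forall b : R, (0 <= b)%R -> P.-integrable setT (hitting_time W b))
     /\
     (limf_esup (fun b : R =>
         ((\int[P]_w hitting_time W b w) / (ln b)%R%:E)%E) (+oo)%R
       <= (growth_const P gamma W)^-1)%E).
Proof.
move=> g0 mW W0 Efin; split; first by apply: part1.
move=> G0; split.
  exact: (@part2_int _ _ _ _ _ _ g0 mW W0 Efin G0).
exact: (@part2_sup _ _ _ _ _ _ g0 mW W0 Efin G0).
Qed.
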